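(* Let $D=(0,1)$, $\alpha\in(1,2)$, $\delta_0=\arccos(c_0/C_0)$, fix $\delta_1\in(\delta_0,\pi/2)$, and for $t>0$ let $\Gamma^t_{\delta_1}=\Gamma_1\cup\Gamma_2\cup\Gamma_t$ with $\Gamma_1=\{\rho e^{\mathrm{i}\delta_1}:\rho\ge t^{-1}\}$, $\Gamma_2=\{\rho e^{-\mathrm{i}\delta_1}:\rho\ge t^{-1}\}$, $\Gamma_t=\{t^{-1}e^{\mathrm{i}\theta}:\delta_1\le|\theta|\le\pi\}$. Then there is a constant $C>0$, independent of $t$, such that for all $t>0$, all $\varphi\in\widetilde H^{\alpha/2}(D)$ and all $z\in\Gamma^t_{\delta_1}$, $$|z|\,\|\varphi\|_{L^2(D)}^2+\|\varphi\|_{\widetilde H^{\alpha/2}(D)}^2\le C\,\big|z\|\varphi\|_{L^2(D)}^2-A(\varphi,\varphi)\big|.$$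
   Context: For $\gamma>0$, $({}_0I_x^\gamma f)(x)=\frac{1}{\Gamma(\gamma)}\int_0^x(x-t)^{\gamma-1}f(t)\,dt$ and $({}_xI_1^\gamma f)(x)=\frac{1}{\Gamma(\gamma)}\int_x^1(t-x)^{\gamma-1}f(t)\,dt$; for $n-1<\beta<n$, ${}_0^RD_x^\beta u=\frac{d^n}{dx^n}({}_0I_x^{n-\beta}u)$ and ${}_x^RD_1^\beta u=(-1)^n\frac{d^n}{dx^n}({}_xI_1^{n-\beta}u)$ (Riemann–Liouville), extended by continuity. $\widetilde H^s(D)$ is the set of $u\in H^s(D)$ whose zero extension is in $H^s(\mathbb{R})$. The sesquilinear form $A(\varphi,\psi)=-\big({}_0^RD_x^{\alpha/2}\varphi,\ {}_x^RD_1^{\alpha/2}\psi\big)$ on $U=\widetilde H^{\alpha/2}(D)$ is known to satisfy $\Re A(\psi,\psi)\ge c_0\|\psi\|_U^2$ and $|A(\varphi,\psi)|\le C_0\|\varphi\|_U\|\psi\|_U$ for constants $0<c_0\le C_0$. *)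

(* Defs.v *)
From HB Require Import structures.
From Stdlib Require Import ClassicalEpsilon.
From mathcomp Require Import all_boot all_order all_algebra.
From mathcomp Require Import all_classical all_reals all_analysis.
From mathcomp Require Import complex.
Set Implicit Arguments. Unset Strict Implicit. Unset Printing Implicit Defensive.
Import Order.TTheory GRing.Theory Num.Theory.
Local Open Scope classical_set_scope.
Local Open Scope ring_scope.

Section FracDefs.
Variable R : realType.
Local Notation mu := (@lebesgue_measure R).

Definition Dset : set R := `]0, 1[.

(** Complex-valued functions on the real line (elements of H~^s(D) are
    represented by their zero extension to R). *)

Definition csq (w : R[i]) : R := complex.Re w ^+ 2 + complex.Im w ^+ 2.

Definition cmeasurable (f : R -> R[i]) : Prop :=
  measurable_fun setT (fun x => complex.Re (f x)) /\ measurable_fun setT (fun x => complex.Im (f x)).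

Definition cint (A : set R) (f : R -> R[i]) : R[i] :=
  Complex (Rintegral mu A (fun x => complex.Re (f x))) (Rintegral mu A (fun x => complex.Im (f x))).

Definition L2energy (A : set R) (f : R -> R[i]) : \bar R :=
  (\int[mu]_(x in A) (csq (f x))%:E)%E.

Definition gagliardo (s : R) (u : R -> R[i]) : \bar R :=
  (\int[mu]_(x in setT) \int[mu]_(y in setT)
     (csq (u x - u y) / (`|x - y| `^ (1 + 2 * s)))%:E)%E.

Definition Htilde (s : R) (u : R -> R[i]) : Prop :=
  [/\ cmeasurable u,
      (forall x, ~ (0 < x < 1) -> u x = 0),
      (L2energy setT u < +oo)%E &
      (gagliardo s u < +oo)%E].

(* ||u||^2_{H~^s(D)} := ||u~||^2_{H^s(R)} (Slobodeckij norm) *)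
Definition Hnorm2 (s : R) (u : R -> R[i]) : R :=
  fine (L2energy setT u + gagliardo s u)%E.

Definition L2norm2 (u : R -> R[i]) : R := fine (L2energy Dset u).

Definition Gammaf (g : R) : R :=
  Rintegral mu `]0, +oo[ (fun t => t `^ (g - 1) * expR (- t)).

Definition RLint_left (g : R) (f : R -> R[i]) (x : R) : R[i] :=
  Complex (Gammaf g)^-1 0 *
  cint `]0, x[ (fun t => Complex ((x - t) `^ (g - 1)) 0 * f t).

Definition RLint_right (g : R) (f : R -> R[i]) (x : R) : R[i] :=
  Complex (Gammaf g)^-1 0 *
  cint `]x, 1[ (fun t => Complex ((t - x) `^ (g - 1)) 0 * f t).

Definition test_fun (psi : R -> R) : Prop :=
  (forall (n : nat) (x : R), derivable (derive1n n psi) x 1) /\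
  exists a b : R, [/\ 0 < a, a < b, b < 1 &
    forall x, x < a \/ b < x -> psi x = 0].

Definition is_wderiv (F g : R -> R[i]) : Prop :=
  [/\ cmeasurable g, (L2energy Dset g < +oo)%E &
      forall psi, test_fun psi ->
        cint Dset (fun x => F x * Complex (derive1 psi x) 0) =
        - cint Dset (fun x => g x * Complex (psi x) 0)].

(* the (chosen) weak derivative on D, 0 if it does not exist *)
Definition wderiv (F : R -> R[i]) : R -> R[i] :=
  epsilon (inhabits (fun _ => 0)) (fun g => is_wderiv F g \/
                                          ((~ exists h, is_wderiv F h) /\ g = fun _ => 0)).

(* Riemann--Liouville derivatives of order beta in (0,1) (n = 1) *)
Definition RLD_left (b : R) (u : R -> R[i]) : R -> R[i] :=
  wderiv (RLint_left (1 - b) u).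

Definition RLD_right (b : R) (u : R -> R[i]) : R -> R[i] :=
  fun x => - wderiv (RLint_right (1 - b) u) x.

Definition Aform (alpha : R) (phi psi : R -> R[i]) : R[i] :=
  - cint Dset (fun x => RLD_left (alpha / 2) phi x *
                           conjc (RLD_right (alpha / 2) psi x)).

Definition contour (delta1 t : R) (z : R[i]) : Prop :=
  (exists rho, t^-1 <= rho /\ z = Complex (rho * cos delta1) (rho * sin delta1)) \/
  (exists rho, t^-1 <= rho /\ z = Complex (rho * cos delta1) (- (rho * sin delta1))) \/
  (exists theta, delta1 <= `|theta| <= pi /\
                 z = Complex (t^-1 * cos theta) (t^-1 * sin theta)).

Definition cabs (z : R[i]) : R := Normc.normc z.

End FracDefs.

(* Main.v *)
Require Import Defs.
From HB Require Import structures.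
From mathcomp Require Import all_boot all_order all_algebra.
From mathcomp Require Import all_classical all_reals all_analysis.
From mathcomp Require Import complex.
Import Order.TTheory GRing.Theory Num.Theory.
Local Open Scope ring_scope.

From mathcomp Require Import ring lra.

Lemma core (R : realType) (u1 u2 v1 v2 nu nv m k : R) :
  0 <= nu -> 0 <= nv -> nu ^+ 2 = u1 ^+ 2 + u2 ^+ 2 -> nv ^+ 2 = v1 ^+ 2 + v2 ^+ 2 ->
  m < k -> k - m <= 2 -> u1 <= m * nu -> k * nv <= v1 ->
  ((k - m) / 2 * (nu + nv)) ^+ 2 <= (u1 - v1) ^+ 2 + (u2 - v2) ^+ 2.
Proof.
move=> hu hv eu ev hmk hk2 h1 h2.
set P := u1 * v1 + u2 * v2.
have hA : (k - m) * (nu * nv) <= nu * v1 - nv * u1.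
  have a : 0 <= nu * (v1 - k * nv) by apply: mulr_ge0 => //; lra.
  have b : 0 <= nv * (m * nu - u1) by apply: mulr_ge0 => //; lra.
  nra.
have hB : (nu * v1 - nv * u1) ^+ 2 + (nu * v2 - nv * u2) ^+ 2
          = 2 * (nu * nv) * (nu * nv - P).
  rewrite /P. have e1 : nu * nu = u1 ^+ 2 + u2 ^+ 2 by rewrite -eu expr2.
  have e2 : nv * nv = v1 ^+ 2 + v2 ^+ 2 by rewrite -ev expr2.
  nra.
have hCS : P <= nu * nv.
  have : P ^+ 2 <= (nu * nv) ^+ 2.
    rewrite exprMn eu ev /P. have := sqr_ge0 (u1 * v2 - u2 * v1). nra.
  move=> h; have hn := mulr_ge0 hu hv; nra.
have hC : (k - m) ^+ 2 / 2 * (nu * nv) <= nu * nv - P.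
  have hn := mulr_ge0 hu hv.
  have [z|pos] := eqVneq (nu * nv) 0.
    rewrite z mulr0; lra.
  have hp : 0 < nu * nv by rewrite lt_def pos hn.
  have hA2 : ((k - m) * (nu * nv)) ^+ 2 <= (nu * v1 - nv * u1) ^+ 2.
    have h0 : 0 <= (k - m) * (nu * nv) by apply: mulr_ge0 => //; lra.
    rewrite !expr2; apply: ler_pM => //.
  have hX : (k - m) ^+ 2 * (nu * nv) ^+ 2 <= 2 * (nu * nv) * (nu * nv - P).
    rewrite -hB -exprMn; have := sqr_ge0 (nu * v2 - nv * u2); lra.
  move: hX; set q := nu * nv; set c := (k - m) ^+ 2 => hX.
  rewrite -subr_ge0.
  have -> : q - P - c / 2 * q = (2 * q * (q - P) - c * q ^+ 2) / (2 * q).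
    by field.
  apply: divr_ge0; rewrite ?subr_ge0 //; rewrite /q; lra.
have e1 : nu * nu = u1 ^+ 2 + u2 ^+ 2 by rewrite -eu expr2.
have e2 : nv * nv = v1 ^+ 2 + v2 ^+ 2 by rewrite -ev expr2.
have hn := mulr_ge0 hu hv.
have hkm : (k - m) ^+ 2 <= 4 by nra.
have hkm2 : 0 <= 4 - (k - m) ^+ 2 by lra.
have hY := mulr_ge0 hkm2 (sqr_ge0 (nu - nv)).
have -> : (u1 - v1) ^+ 2 + (u2 - v2) ^+ 2 = nu * nu + nv * nv - 2 * P.
  rewrite e1 e2 /P; ring.
move: hC hY; set c := (k - m) ^+ 2 => hC hY.
have -> : ((k - m) / 2 * (nu + nv)) ^+ 2 = c / 4 * (nu - nv) ^+ 2 + c * (nu * nv).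
  by rewrite /c; field.
lra.
Qed.

Lemma sqrt_polar (R : realType) (r c s : R) : 0 <= r -> c ^+ 2 + s ^+ 2 = 1 ->
  Num.sqrt ((r * c) ^+ 2 + (r * s) ^+ 2) = r.
Proof.
move=> hr hcs.
have -> : (r * c) ^+ 2 + (r * s) ^+ 2 = r ^+ 2 by rewrite !exprMn -mulrDr hcs mulr1.
by rewrite sqrtr_sqr ger0_norm.
Qed.

Lemma contour_re (R : realType) (delta1 t : R) (z : R[i]) :
  0 < t -> 0 <= delta1 <= pi ->
  contour delta1 t z -> complex.Re z <= cos delta1 * cabs z.
Proof.
move=> ht /andP[d0 dpi] [[rho [hr ->]]|[[rho [hr ->]]|[th [hth ->]]]]; rewrite /cabs /=.
- have hr0 : 0 <= rho by apply: le_trans hr; rewrite invr_ge0 ltW.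
  by rewrite sqrt_polar // ?cos2Dsin2 // mulrC.
- have hr0 : 0 <= rho by apply: le_trans hr; rewrite invr_ge0 ltW.
  by rewrite sqrrN sqrt_polar // ?cos2Dsin2 // mulrC.
- have hr0 : 0 <= t^-1 by rewrite invr_ge0 ltW.
  rewrite sqrt_polar // ?cos2Dsin2 // mulrC.
  apply: ler_wpM2r => //.
  have hc : cos th = cos `|th|.
    by case: (lerP 0 th) => h; [rewrite ger0_norm | rewrite ltr0_norm ?cosN].
  rewrite hc.
  case/andP: hth => h1 h2.
  case: (eqVneq delta1 `|th|) => [->//|hne].
  have hlt : delta1 < `|th| by rewrite lt_def eq_sym hne h1.
  apply: ltW; rewrite ltr_cos //; rewrite in_itv /= ?d0 ?dpi ?normr_ge0 ?h2 //.
Qed.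

Lemma energy_ge0 (R : realType) (A : set R) (u : R -> R[i]) :
  (0 <= L2energy A u)%E.
Proof.
apply: integral_ge0 => x _; rewrite lee_fin /csq.
by apply: addr_ge0; apply: sqr_ge0.
Qed.

Lemma gagliardo_ge0 (R : realType) (s : R) (u : R -> R[i]) :
  (0 <= gagliardo s u)%E.
Proof.
apply: integral_ge0 => x _; apply: integral_ge0 => y _; rewrite lee_fin /csq.
by apply: divr_ge0; [apply: addr_ge0; apply: sqr_ge0 | apply: powR_ge0].
Qed.

Theorem lemma4p4 (R : realType) (alpha c0 C0 delta1 : R) :
  1 < alpha < 2 ->
  0 < c0 -> c0 <= C0 ->
  (forall psi : R -> R[i], Htilde (alpha / 2) psi ->
     c0 * Hnorm2 (alpha / 2) psi <= complex.Re (Aform alpha psi psi)) ->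
  (forall phi psi : R -> R[i], Htilde (alpha / 2) phi -> Htilde (alpha / 2) psi ->
     cabs (Aform alpha phi psi) <=
       C0 * Num.sqrt (Hnorm2 (alpha / 2) phi) * Num.sqrt (Hnorm2 (alpha / 2) psi)) ->
  acos (c0 / C0) < delta1 < pi / 2 ->
  exists C : R, 0 < C /\
    forall t : R, 0 < t ->
    forall phi : R -> R[i], Htilde (alpha / 2) phi ->
    forall z : R[i], contour delta1 t z ->
      cabs z * L2norm2 phi + Hnorm2 (alpha / 2) phi <=
        C * cabs (z * Complex (L2norm2 phi) 0 - Aform alpha phi phi).
Proof.
move=> _ hc0 hcC Hco Hbd /andP[hd1 hd2].
have hC0 : 0 < C0 by apply: lt_le_trans hcC.
set k := c0 / C0.
have hk0 : 0 < k by apply: divr_gt0.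
have hk1 : k <= 1 by rewrite ler_pdivrMr // mul1r.
have hkI : -1 <= k <= 1 by apply/andP; split => //; lra.
have [/andP[ha0 hapi] hcosa] := acos_def hkI.
have hpi := pi_gt0 R.
have hdpi : delta1 <= pi by lra.
set m := cos delta1.
have hmk : m < k.
  rewrite /m -{1}hcosa ltr_cos // in_itv /=; apply/andP; split => //; lra.
have hm0 : 0 <= m by apply: cos_ge0_pihalf; apply/andP; split; lra.
have hkm : 0 < k - m by lra.
exists ((1 + c0^-1) * (2 / (k - m))); split.
  apply: mulr_gt0; last by apply: divr_gt0.
  by apply: addr_gt0 => //; rewrite invr_gt0.
move=> t ht phi hphi z hz.
have hdd : 0 <= delta1 <= pi by apply/andP; split; lra.
have hre := @contour_re _ delta1 t z ht hdd hz; rewrite -/m in hre.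
have hh : 0 <= Hnorm2 (alpha / 2) phi.
  by apply: fine_ge0; apply: adde_ge0; [apply: energy_ge0 | apply: gagliardo_ge0].
have hl : 0 <= L2norm2 phi by apply: fine_ge0; apply: energy_ge0.
have H1 := Hco phi hphi.
have H2 := Hbd phi phi hphi hphi.
rewrite -mulrA -expr2 sqr_sqrtr // in H2.
move: H1 H2 hre.
set h := Hnorm2 (alpha / 2) phi.
set l := L2norm2 phi.
case: (Aform alpha phi phi) => a1 a2.
case: z {hz} => x y.
rewrite /cabs /= => H1 H2 hre.
set nz := Num.sqrt (x ^+ 2 + y ^+ 2) in hre *.
set nv := Num.sqrt (a1 ^+ 2 + a2 ^+ 2) in H2 *.
have hnz : 0 <= nz by apply: sqrtr_ge0.
have hnv : 0 <= nv by apply: sqrtr_ge0.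
have hnu : 0 <= nz * l by apply: mulr_ge0.
have hcore := @core R (x * l) (y * l) a1 a2 (nz * l) nv m k hnu hnv.
have e1 : (nz * l) ^+ 2 = (x * l) ^+ 2 + (y * l) ^+ 2.
  by rewrite exprMn sqr_sqrtr ?addr_ge0 ?sqr_ge0 // !exprMn mulrDl.
have e2 : nv ^+ 2 = a1 ^+ 2 + a2 ^+ 2 by rewrite sqr_sqrtr ?addr_ge0 ?sqr_ge0.
have hu1 : x * l <= m * (nz * l) by rewrite mulrA; apply: ler_wpM2r.
have hv1 : k * nv <= a1.
  apply: le_trans H1; rewrite /k -mulrA; apply: ler_wpM2l; first exact: ltW.
  by rewrite ler_pdivrMl.
have := hcore e1 e2 hmk (_ : k - m <= 2) hu1 hv1.
move=> /(_ ltac:(lra)) hsq.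
have hd : (k - m) / 2 * (nz * l + nv) <=
    Num.sqrt ((x * l - y * 0 - a1) ^+ 2 + (x * 0 + y * l - a2) ^+ 2).
  rewrite -(@ger0_norm _ ((k - m) / 2 * (nz * l + nv))); last first.
    by apply: mulr_ge0; [apply: divr_ge0; lra | apply: addr_ge0].
  rewrite -sqrtr_sqr ler_sqrt; last by apply: addr_ge0; apply: sqr_ge0.
  by rewrite !mulr0 subr0 add0r.
have hhv : h <= nv / c0.
  rewrite ler_pdivlMr // mulrC.
  apply: le_trans H1 _.
  have : a1 ^+ 2 <= nv ^+ 2 by rewrite e2 lerDl sqr_ge0.
  move=> h3; have := sqr_ge0 a2; nra.
have hci : 0 < c0^-1 by rewrite invr_gt0.
set S := Num.sqrt _ in hd *.
rewrite -mulrA.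
have hd' : nz * l + nv <= 2 / (k - m) * S.
  have <- : 2 / (k - m) * ((k - m) / 2 * (nz * l + nv)) = nz * l + nv.
    by field; rewrite gt_eqF.
  apply: ler_wpM2l => //; apply: divr_ge0; lra.
have : nz * l + h <= (1 + c0^-1) * (nz * l + nv).
  have : nv / c0 = c0^-1 * nv by rewrite mulrC.
  have := mulr_ge0 (ltW hci) hnz; nra.
move=> h4; apply: le_trans h4 _; apply: ler_wpM2l => //.
by apply: addr_ge0 => //; apply: ltW.
Qed.
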